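(* Fix $N\in\mathbb{N}$. Let $\mathrm{WCM}_N$ be the random directed multigraph on $[N]$ with $x_{ij}=1_{\{U_i^1=j\}}+1_{\{U_i^2=j\}}$ directed edges from $i$ to $j$, where $(U_i^1,U_i^2)_{i\in[N]}$ are $2N$ independent uniform random variables on $[N]$. Let $(Y_1,\dots,Y_N)$ be multinomially distributed with $2N$ trials and $N$ categories each of probability $1/N$, and given $(Y_i)$, let $\mathrm{DCM}_N(d^-,d^+)$ be the directed configuration model with out-degrees $d_i^+=2$ and in-degrees $d_i^-=Y_i$ for all $i\in[N]$. Then $\mathrm{WCM}_N$ is equal in law to this (randomized) $\mathrm{DCM}_N(d^-,d^+)$.
   Context: Directed configuration model: given in-degrees $(d_i^-)$ and out-degrees $(d_i^+)$ on $[N]$ with $\sum_i d_i^-=\sum_i d_i^+=s$, give vertex $i$ a set of $d_i^+$ out-half-edges and $d_i^-$ in-half-edges. Enumerating all $s$ out-half-edges in some order, match the first one with a uniformly chosen in-half-edge, the second with a uniformly chosen remaining in-half-edge, and so on (equivalently, a uniform bijection between out- and in-half-edges). The resulting multigraph $\mathrm{DCM}_N(d^-,d^+)$ has one directed edge from $i$ to $j$ for each out-half-edge of $i$ matched with an in-half-edge of $j$ (loops and multiple edges allowed). Digraphs are identified with their matrices $(x_{ij})$ of edge multiplicities. *)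

(* Defs.v *)
From mathcomp Require Import all_boot all_order all_algebra.
Set Implicit Arguments. Unset Strict Implicit. Unset Printing Implicit Defensive.
Import GRing.Theory Num.Theory.
Local Open Scope ring_scope.

(* A directed multigraph on [N] = 'I_N is identified with its matrix of
   edge multiplicities x : 'M[nat]_N (x i j = number of edges i -> j). *)

Definition out_half N (dp : 'I_N -> nat) : finType := {i : 'I_N & 'I_(dp i)}.
Definition in_half N (dm : 'I_N -> nat) : finType := {j : 'I_N & 'I_(dm j)}.

(* a matching of out-half-edges to in-half-edges (a bijection when the
   degree sums agree; injective maps between sets of equal size) *)
Definition matchings N (dm dp : 'I_N -> nat) : {set {ffun out_half dp -> in_half dm}} :=
  [set f : {ffun out_half dp -> in_half dm} | injectiveb f].

Definition dcm_graph N (dm dp : 'I_N -> nat) (f : {ffun out_half dp -> in_half dm})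
  : 'M[nat]_N :=
  \matrix_(i, j) #|[set h : out_half dp | (tag h == i) && (tag (f h) == j)]|.

Definition dcm_law N (dm dp : 'I_N -> nat) (x : 'M[nat]_N) : rat :=
  #|[set f in matchings dm dp | dcm_graph f == x]|%:R / #|matchings dm dp|%:R.

(* U (i, k) = U_i^{k+1}, k in {0,1}; 2N independent uniforms on [N] *)
Definition wcm_graph N (U : {ffun 'I_N * 'I_2 -> 'I_N}) : 'M[nat]_N :=
  \matrix_(i, j) #|[set k : 'I_2 | U (i, k) == j]|.

Definition wcm_law N (x : 'M[nat]_N) : rat :=
  #|[set U : {ffun 'I_N * 'I_2 -> 'I_N} | wcm_graph U == x]|%:R / (N ^ (2 * N))%:R.

Definition multinom_pmf (n : nat) N (y : 'I_N -> nat) : rat :=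
  if (\sum_(i < N) y i)%N == n then
    (n`!)%:R / (\prod_(i < N) (y i)`!)%:R * (N%:R ^+ n)^-1
  else 0.

(* Main.v *)
Require Import Defs.
From mathcomp Require Import all_boot all_order all_algebra.
From mathcomp Require Import ring.
Set Implicit Arguments. Unset Strict Implicit. Unset Printing Implicit Defensive.
Import GRing.Theory Num.Theory.

Lemma sum_tag (I : finType) (T_ : I -> finType) (F : {i : I & T_ i} -> nat) :
  (\sum_h F h = \sum_i \sum_(k : T_ i) F (Tagged T_ k))%N.
Proof.
rewrite (sig_big_dep (fun _ => true) (fun _ _ => true) (fun i k => F (Tagged T_ k))) /=.
by apply: eq_bigr => -[i k].
Qed.

Lemma card_tag_sum (I : finType) (T_ : I -> finType) (P : pred {i : I & T_ i}) :
  #|[set h | P h]| = (\sum_i \sum_(k : T_ i) P (Tagged T_ k))%N.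
Proof.
rewrite -sum1dep_card big_mkcond /= sum_tag; apply: eq_bigr => i _.
by apply: eq_bigr => k _; case: (P _).
Qed.

Section Gen.
Variables (J B : finType) (p : B -> J).

Lemma count_tuples (u : seq J) n (A : pred B) : size u = n ->
  #|[set t : n.-tuple B | [&& all A t, uniq t & map p t == u]]| =
  \prod_(j : J) #|[pred b | A b && (p b == j)]| ^_ (count_mem j u).
Proof.
elim: u n A => [|j u IH] [|n] A //= Hs.
  rewrite big1 // (@eq_card1 _ [tuple]) // => t.
  by rewrite [t]tuple0 inE /=.
case: Hs => Hs.
rewrite -sum1dep_card (partition_big (@thead _ _) [pred x | A x && (p x == j)]) /=; last first.
  by case/tupleP=> x t /=; rewrite eqseq_cons => /and3P[/andP[-> _] _ /andP[-> _]].
pose m := #|[pred b | A b && (p b == j)]|.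
pose G := (m.-1 ^_ (count_mem j u) *
  \prod_(j' | j' != j) #|[pred b | A b && (p b == j')]| ^_ (count_mem j' u))%N.
transitivity (\sum_(x | A x && (p x == j)) G).
  apply: eq_bigr => x /andP[Ax pxj].
  rewrite (_ : \sum_(_ | _) _ = #|[set t : n.-tuple B | [&& all (predD1 A x) t, uniq t & map p t == u]]|); last first.
    rewrite -sum1dep_card.
    rewrite (reindex (fun t : n.-tuple B => [tuple of x :: t])) /=; last first.
      pose ttail (t : n.+1.-tuple B) := [tuple of behead t].
      exists ttail => [t _ | t /andP[_ /eqP <-]]; first exact: val_inj.
      by rewrite -tuple_eta.
    apply: eq_bigl=> t; rewrite theadE eqxx andbT /= eqseq_cons Ax pxj /=.
    rewrite (_ : all (predD1 A x) t = (x \notin t) && all A t); last first.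
      by rewrite all_predI all_predC has_pred1.
    by case: (x \notin t); case: (all A t); case: uniq.
  rewrite IH // (bigD1 j) //=; congr (_ * _)%N.
    congr (_ ^_ _).
    rewrite /m [X in _ = X.-1](cardD1 x) inE /= Ax pxj /=.
    by apply: eq_card => b; rewrite !inE /=; case: (b == x); rewrite ?andbF.
  apply: eq_bigr => j' nj'j; congr (_ ^_ _); apply: eq_card => b; rewrite !inE /=.
  case: eqP => [-> | _] //=; rewrite (eqP pxj) eq_sym (negbTE nj'j) andbF //.
rewrite sum_nat_const (bigD1 j) //= eqxx add1n ffactnS /G mulnA; congr (_ * _)%N.
apply: eq_bigr => j' nj'j; congr (_ ^_ _).
by rewrite eq_sym (negbTE nj'j).
Qed.
End Gen.

Lemma card_count (T : finType) (P : pred T) : #|[set a | P a]| = count P (enum T).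
Proof. by rewrite -sum1dep_card -sum1_count big_enum_cond. Qed.

Section App.
Variable N : nat.
Definition dp2 : 'I_N -> nat := fun _ => 2%N.
Definition OH := out_half dp2.

Definition Uf (dm : 'I_N -> nat) (f : {ffun OH -> in_half dm}) : {ffun 'I_N * 'I_2 -> 'I_N} :=
  [ffun ik => tag (f (@Tagged 'I_N ik.1 (fun i => 'I_(dp2 i)) ik.2))].

Definition cnt (U : {ffun 'I_N * 'I_2 -> 'I_N}) (j : 'I_N) : nat :=
  #|[set a : OH | U (tag a, tagged a) == j]|.

Lemma card_OH : #|{: OH}| = (2 * N)%N.
Proof.
rewrite -(@eq_card _ [set h : OH | true]); last by move=> h; rewrite inE.
rewrite card_tag_sum /= (eq_bigr (fun _ => 2%N)); last by move=> i _; rewrite sum1_card card_ord.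
by rewrite sum_nat_const card_ord mulnC.
Qed.

Lemma card_IH (dm : 'I_N -> nat) : #|{: in_half dm}| = (\sum_i dm i)%N.
Proof.
rewrite -(@eq_card _ [set h : in_half dm | true]); last by move=> h; rewrite inE.
rewrite card_tag_sum /=; apply: eq_bigr => i _; by rewrite sum1_card card_ord.
Qed.

Lemma card_fib (dm : 'I_N -> nat) j : #|[pred b : in_half dm | predT b && (tag b == j)]| = dm j.
Proof.
rewrite -(@eq_card _ [set h : in_half dm | tag h == j]); last by move=> h; rewrite inE.
rewrite card_tag_sum /= (bigD1 j) //= [X in (_ + X)%N]big1 ?addn0.
  rewrite big_const_ord iter_addn_0 (eqxx j) mul1n //.
by move=> i nij; apply: big1 => k _; rewrite (negbTE nij).
Qed.

Lemma graphE (dm : 'I_N -> nat) (f : {ffun OH -> in_half dm}) : dcm_graph f = wcm_graph (Uf f).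
Proof.
apply/matrixP => i j; rewrite !mxE card_tag_sum /= (bigD1 i) //= [X in (_ + X)%N = _]big1 ?addn0.
  rewrite -sum1dep_card [RHS]big_mkcond /dp2; apply: eq_bigr => k _; rewrite (eqxx i) /= ffunE /=; by case: (_ == j).
by move=> i' ni'; apply: big1 => k _; rewrite (negbTE ni').
Qed.


Lemma fiber (dm : 'I_N -> nat) (U : {ffun 'I_N * 'I_2 -> 'I_N}) :
  #|[set f : {ffun OH -> in_half dm} | injectiveb f && (Uf f == U)]| =
  (\prod_j (dm j) ^_ (cnt U j))%N.
Proof.
set u := map (fun a : OH => U (tag a, tagged a)) (enum OH).
have Hs : size u = #|{: OH}| by rewrite size_map cardE.
rewrite -(card_imset _ (can_inj (@fgraphK _ _))).
rewrite (_ : #|_| = #|[set t : #|{: OH}|.-tuple (in_half dm) |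
    [&& all predT t, uniq t & map tag t == u]]|); last first.
  apply: eq_card => t; rewrite inE; apply/imsetP/idP.
    move=> [f]; rewrite inE => /andP[injf /eqP Uff] ->.
    rewrite all_predT /= -codom_ffun codomE; apply/andP; split; first exact: injf.
    rewrite -map_comp; apply/eqP/eq_in_map => a _ /=.
    by rewrite -Uff ffunE; case: a.
  move=> /and3P[_ ut /eqP mt]; exists (Finfun t); last by rewrite FinfunK.
  rewrite inE; apply/andP; split.
    by rewrite /injectiveb /dinjectiveb -codomE codom_ffun FinfunK.
  apply/eqP/ffunP => -[i k]; rewrite ffunE /=.
  have mt' : map tag (codom (Finfun t)) = u by rewrite codom_ffun FinfunK.
  move: mt'; rewrite codomE -map_comp => /eq_in_map H.
  by have := H (@Tagged _ i (fun i => 'I_(dp2 i)) k) (mem_enum _ _).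
rewrite (@count_tuples _ _ tag u _ predT Hs); apply: eq_bigr => j _.
by rewrite card_fib /u count_map /cnt card_count.
Qed.

Lemma Kcount (dm : 'I_N -> nat) (x : 'M[nat]_N) :
  #|[set f in matchings dm dp2 | dcm_graph f == x]| =
  (\sum_(U | wcm_graph U == x) \prod_j (dm j) ^_ (cnt U j))%N.
Proof.
rewrite -sum1dep_card (partition_big (@Uf dm) (fun U => wcm_graph U == x)) /=; last first.
  by move=> f; rewrite inE => /andP[_]; rewrite graphE.
apply: eq_bigr => U; move=> /eqP HU; rewrite sum1dep_card -fiber; apply: eq_card => f.
rewrite /matchings !inE.
case: (Uf f =P U) => [e|_]; rewrite ?andbF ?andbT //.
by rewrite graphE e HU eqxx andbT.
Qed.

Lemma cnt_le U j : (cnt U j <= 2 * N)%N.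
Proof. by rewrite -card_OH /cnt max_card. Qed.

Lemma sum_cnt U : (\sum_j cnt U j)%N = (2 * N)%N.
Proof.
rewrite -card_OH -sum1_card (partition_big (fun a : OH => U (tag a, tagged a)) predT) //=.
apply: eq_bigr => j _; rewrite sum1dep_card; apply: eq_card => a; by rewrite !inE.
Qed.

Definition yc U : {ffun 'I_N -> 'I_((2 * N).+1)} := [ffun j => inord (cnt U j)].

Lemma ycE U j : nat_of_ord (yc U j) = cnt U j.
Proof. by rewrite ffunE inordK // ltnS cnt_le. Qed.

Lemma NL (y : {ffun 'I_N -> 'I_((2 * N).+1)}) U :
  (\sum_j nat_of_ord (y j))%N = (2 * N)%N ->
  (\prod_j (nat_of_ord (y j)) ^_ (cnt U j))%N =
  if y == yc U then (\prod_j (nat_of_ord (y j))`!)%N else 0%N.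
Proof.
move=> Hs; case: eqP => [->|ne].
  by apply: eq_bigr => j _; rewrite ycE ffactnn.
case: (boolP [exists j, nat_of_ord (y j) < cnt U j]) => [/existsP[j ltj] | /existsPn H].
  by rewrite (bigD1 j) //= ffact_small // mul0n.
exfalso; apply: ne; apply/ffunP => j; apply: val_inj; rewrite /= ycE.
have le : forall j, (cnt U j <= y j)%N by move=> i; rewrite leqNgt H.
have : (\sum_j (nat_of_ord (y j) - cnt U j) == 0)%N.
  by rewrite sumnB; [rewrite Hs sum_cnt subnn | move=> i _; apply: le].
rewrite sum_nat_eq0 => /forallP /(_ j) /=; rewrite subn_eq0 => le2.
by apply/eqP; rewrite eqn_leq le2 le.
Qed.

End App.

Local Open Scope ring_scope.

Lemma step1 (N : nat) (x : 'M[nat]_N) (y : {ffun 'I_N -> 'I_((2 * N).+1)}) :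
  multinom_pmf (2 * N)%N (fun i => nat_of_ord (y i)) *
     dcm_law (fun i => nat_of_ord (y i)) (fun _ => 2%N) x =
  (\sum_(U | wcm_graph U == x) ((y == yc U) : nat))%:R / (N ^ (2 * N))%:R.
Proof.
rewrite /multinom_pmf /dcm_law.
change (fun _ : 'I_N => 2%N) with (@dp2 N).
rewrite Kcount /matchings card_inj_ffuns card_IH card_OH.
case: eqP => [Hsum|Hsum].
  rewrite Hsum ffactnn -natrX.
  have -> : (\sum_(U | wcm_graph U == x) \prod_j (nat_of_ord (y j)) ^_ (cnt U j))%N =
    ((\prod_j (nat_of_ord (y j))`!) * \sum_(U | wcm_graph U == x) ((y == yc U) : nat))%N.
    rewrite big_distrr /=; apply: eq_bigr => U _; rewrite NL //.
    by case: (y == yc U); rewrite ?muln1 ?muln0.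
  have h1 : ((2 * N)`!)%:R != 0 :> rat by rewrite pnatr_eq0 -lt0n fact_gt0.
  have h2 : (\prod_j (nat_of_ord (y j))`!)%:R != 0 :> rat.
    by rewrite pnatr_eq0 -lt0n prodn_gt0 // => j; rewrite fact_gt0.
  have h3 : (N ^ (2 * N))%:R != 0 :> rat by rewrite pnatr_eq0 -lt0n expn_gt0; by case: (posnP N) => [->|Np]; rewrite ?Np.
  rewrite natrM; field.
  by rewrite h1 h2 h3.
rewrite mul0r big1 ?mul0r // => U _.
case: (y =P yc U) => // e; exfalso; apply: Hsum.
by rewrite e (eq_bigr _ (fun j _ => ycE U j)) sum_cnt.
Qed.

Theorem proposition2p1 (N : nat) (x : 'M[nat]_N) :
  wcm_law x =
  \sum_(y : {ffun 'I_N -> 'I_((2 * N).+1)})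
     multinom_pmf (2 * N)%N (fun i => nat_of_ord (y i)) *
     dcm_law (fun i => nat_of_ord (y i)) (fun _ => 2%N) x.
Proof.
rewrite (eq_bigr _ (fun y _ => step1 x y)) -mulr_suml -natr_sum /wcm_law.
congr (_%:R / _); rewrite exchange_big /= -sum1dep_card; apply: eq_bigr => U _.
rewrite (bigD1 (yc U)) //= eqxx big1 // => y ny.
by rewrite (negbTE ny).
Qed.
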